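(* Let $N\ge3$ and $p>p_{\rm S}$. For $\gamma>0$ let $u(\cdot,\gamma)$ solve (IVP$_\gamma$), set $y(t,\gamma):=2^{-\frac{q}{p-1}}\frac{u(r,\gamma)}{ar^{-\mu}}$ with $r=e^{mt}$, and $\hat y(s,\gamma):=y\big(s-\frac{\log\gamma}{m\mu},\gamma\big)$. Let $\bar u$ be the solution of $\bar u''+\frac{N-1}{\rho}\bar u'+\bar u^p=0$ $(0<\rho<\infty)$, $\bar u(0)=2^{-\frac{q}{p-1}}$, $\bar u'(0)=0$, and $\bar y(s):=\frac{\bar u(e^{ms})}{ae^{-m\mu s}}$. Then for every $s_0\in\mathbb{R}$, as $\gamma\to\infty$, $\hat y(\cdot,\gamma)\to\bar y$ and $\partial_s\hat y(\cdot,\gamma)\to\bar y'$ uniformly on $(-\infty,s_0]$.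
   Context: $A(r)=\frac{2}{1+r^2}$, $p_{\rm S}=\frac{N+2}{N-2}$, $q=\frac{N-2}{2}(p-p_{\rm S})$, $\mu=\frac{2}{p-1}$, $a=\{\mu(N-2-\mu)\}^{\mu/2}$, $m=a^{-(p-1)/2}$. (IVP$_\gamma$): $u''+\frac{N-1}{r}u'+\frac{N(N-2)}{4}A(r)^2u+A(r)^{-q}|u|^{p-1}u=0$ on $(0,\infty)$, $u(0)=\gamma$, $u'(0)=0$. (For $p>p_{\rm S}$, $\bar u>0$ on $[0,\infty)$.) *)

(* Defs.v *)
From Stdlib Require Import Reals Lra.
Open Scope R_scope.

(* x^e for x > 0, and 0 otherwise (e > 0 in all uses) *)
Definition rpow (x e : R) : R := if Rlt_dec 0 x then Rpower x e else 0.

Definition spow (x e : R) : R := rpow (Rabs x) (e - 1) * x.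

Definition A (r : R) : R := 2 / (1 + r ^ 2).
Definition pS (N : nat) : R := (INR N + 2) / (INR N - 2).
Definition qexp (N : nat) (p : R) : R := (INR N - 2) / 2 * (p - pS N).
Definition mu (p : R) : R := 2 / (p - 1).
Definition acst (N : nat) (p : R) : R :=
  Rpower (mu p * (INR N - 2 - mu p)) (mu p / 2).
Definition mcst (N : nat) (p : R) : R := Rpower (acst N p) (- (p - 1) / 2).

(* u solves (IVP_gamma) on (0,oo): u(0)=gamma, u'(0)=0 (one-sided),
   u is C^2-type (twice differentiable) on (0,oo) and satisfies the ODE. *)
Definition IVP_sol (N : nat) (p gamma : R) (u : R -> R) : Prop :=
  u 0 = gamma /\
  limit1_in (fun r => (u r - gamma) / r) (fun r => 0 < r) 0 0 /\
  exists u1 u2 : R -> R,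
    forall r, 0 < r ->
      derivable_pt_lim u r (u1 r) /\ derivable_pt_lim u1 r (u2 r) /\
      u2 r + (INR N - 1) / r * u1 r
        + INR N * (INR N - 2) / 4 * (A r) ^ 2 * u r
        + Rpower (A r) (- qexp N p) * spow (u r) p = 0.

Definition Lane_Emden_sol (N : nat) (p c : R) (ub : R -> R) : Prop :=
  ub 0 = c /\
  limit1_in (fun r => (ub r - c) / r) (fun r => 0 < r) 0 0 /\
  exists u1 u2 : R -> R,
    forall r, 0 < r ->
      derivable_pt_lim ub r (u1 r) /\ derivable_pt_lim u1 r (u2 r) /\
      u2 r + (INR N - 1) / r * u1 r + rpow (ub r) p = 0.

Definition yfun (N : nat) (p : R) (u : R -> R) (t : R) : R :=
  Rpower 2 (- qexp N p / (p - 1)) * u (exp (mcst N p * t))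
  / (acst N p * exp (- mcst N p * mu p * t)).

Definition yhat (N : nat) (p gamma : R) (u : R -> R) (s : R) : R :=
  yfun N p u (s - ln gamma / (mcst N p * mu p)).

Definition ybar (N : nat) (p : R) (ub : R -> R) (s : R) : R :=
  ub (exp (mcst N p * s)) / (acst N p * exp (- mcst N p * mu p * s)).

(* Main.v *)
Require Import Defs.
From Stdlib Require Import Reals Lra Lia Classical FunctionalExtensionality.
From Coquelicot Require Import Coquelicot.
Open Scope R_scope.

Lemma dl_cont f x l : derivable_pt_lim f x l -> continuity_pt f x.
Proof. intro H. apply derivable_continuous_pt. exists l; exact H. Qed.

Lemma mvt_closed f df a b : a <= b ->
  (forall x, a <= x <= b -> derivable_pt_lim f x (df x)) ->
  exists c, a <= c <= b /\ f b - f a = df c * (b - a).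
Proof.
  intros Hab Hd.
  destruct (MVT_gen f a b df) as [c [Hc He]].
  - intros x Hx. rewrite Rmin_left in Hx by lra. rewrite Rmax_right in Hx by lra.
    apply is_derive_Reals, Hd; lra.
  - intros x Hx. rewrite Rmin_left in Hx by lra. rewrite Rmax_right in Hx by lra.
    apply dl_cont with (df x), Hd; lra.
  - rewrite Rmin_left in Hc by lra. rewrite Rmax_right in Hc by lra.
    exists c; split; auto.
Qed.

Lemma mono_le f df a b : a <= b ->
  (forall x, a <= x <= b -> derivable_pt_lim f x (df x)) ->
  (forall x, a <= x <= b -> df x <= 0) -> f b <= f a.
Proof.
  intros Hab Hd Hn. destruct (mvt_closed f df a b Hab Hd) as [c [Hc He]].
  specialize (Hn c Hc). nra.
Qed.

Lemma mono_lt f df a b : a < b ->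
  (forall x, a <= x <= b -> derivable_pt_lim f x (df x)) ->
  (forall x, a <= x <= b -> df x < 0) -> f b < f a.
Proof.
  intros Hab Hd Hn. destruct (mvt_closed f df a b (Rlt_le _ _ Hab) Hd) as [c [Hc He]].
  specialize (Hn c Hc). nra.
Qed.

Lemma small_o (g : R -> R) c :
  limit1_in (fun r => (g r - c) / r) (fun r => 0 < r) 0 0 ->
  forall eta, 0 < eta -> exists d, 0 < d /\ forall x, 0 < x < d -> Rabs (g x - c) < eta * x.
Proof.
  intros H eta He. destruct (H eta He) as [d [Hd Hx]].
  exists d; split; auto. intros x [H0 H1].
  assert (Hx' := Hx x). simpl in Hx'. unfold R_dist in Hx'.
  assert (Rabs ((g x - c) / x - 0) < eta) as Hl.
  { apply Hx'. split; auto. rewrite Rminus_0_r, Rabs_right; lra. }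
  rewrite Rminus_0_r in Hl. unfold Rdiv in Hl. rewrite Rabs_mult, Rabs_inv, (Rabs_right x) in Hl by lra.
  apply Rmult_lt_reg_r with (/ x). apply Rinv_0_lt_compat; lra.
  rewrite Rmult_assoc, Rinv_r, Rmult_1_r by lra. exact Hl.
Qed.

Lemma near0 (f f1 : R -> R) :
  (forall x, 0 < x -> derivable_pt_lim f x (f1 x)) ->
  (forall eta, 0 < eta -> exists d, 0 < d /\ forall x, 0 < x < d -> Rabs (f x) < eta * x) ->
  forall eta d0, 0 < eta -> 0 < d0 ->
  exists xi, 0 < xi < d0 /\ Rabs (f xi) < eta /\ Rabs (f1 xi) < eta.
Proof.
  intros Hd Ho eta d0 He Hd0.
  destruct (Ho (eta/4)) as [d [Hdp Hx]]; [lra|].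
  set (x := Rmin (Rmin d d0) 1 / 2).
  assert (Hx1 : 0 < x /\ x < d /\ x < d0 /\ x < 1).
  { unfold x. repeat split;
    try (apply Rmin_pos || apply Rmin_glb_lt); unfold Rmin;
    repeat destruct Rle_dec; lra. }
  destruct (mvt_closed f f1 (x/2) x) as [c [Hc He2]]; [lra| |].
  { intros y Hy. apply Hd. lra. }
  exists c. split; [lra|]. split.
  - assert (Habs := Hx c ltac:(lra)). nra.
  - assert (A1 := Hx x ltac:(lra)). assert (A2 := Hx (x/2) ltac:(lra)).
    assert (Rabs (f x - f (x/2)) < eta/4 * x + eta/4*(x/2)).
    { unfold Rminus. eapply Rle_lt_trans. apply Rabs_triang. rewrite Rabs_Ropp. lra. }
    rewrite He2, Rabs_mult, (Rabs_right (x - x/2)) in H by lra.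
    nra.
Qed.

Lemma dl_eq f x l l' : derivable_pt_lim f x l -> l = l' -> derivable_pt_lim f x l'.
Proof. intros H ->; exact H. Qed.
Lemma dl_ext f g x l : (forall y, f y = g y) -> derivable_pt_lim f x l -> derivable_pt_lim g x l.
Proof. intros H. replace g with f; auto. apply functional_extensionality; auto. Qed.
Lemma d_mul f g x df dg : derivable_pt_lim f x df -> derivable_pt_lim g x dg ->
  derivable_pt_lim (fun t => f t * g t) x (df * g x + f x * dg).
Proof. intros. apply (derivable_pt_lim_mult f g x df dg); auto. Qed.
Lemma d_add f g x df dg : derivable_pt_lim f x df -> derivable_pt_lim g x dg ->
  derivable_pt_lim (fun t => f t + g t) x (df + dg).
Proof. intros. apply (derivable_pt_lim_plus f g x df dg); auto. Qed.
Lemma d_sub f g x df dg : derivable_pt_lim f x df -> derivable_pt_lim g x dg ->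
  derivable_pt_lim (fun t => f t - g t) x (df - dg).
Proof. intros. apply (derivable_pt_lim_minus f g x df dg); auto. Qed.
Lemma d_cst a x : derivable_pt_lim (fun _ => a) x 0.
Proof. apply (derivable_pt_lim_const a x). Qed.
Lemma d_id x : derivable_pt_lim (fun t => t) x 1.
Proof. apply derivable_pt_lim_id. Qed.
Lemma d_scal a f x df : derivable_pt_lim f x df -> derivable_pt_lim (fun t => a * f t) x (a * df).
Proof. intro H. eapply dl_eq. apply (d_mul (fun _ => a) f). apply d_cst. exact H. cbv beta; ring. Qed.
Lemma d_comp f g x df dg : derivable_pt_lim f x df -> derivable_pt_lim g (f x) dg ->
  derivable_pt_lim (fun t => g (f t)) x (dg * df).
Proof. intros. apply (derivable_pt_lim_comp f g x df dg); auto. Qed.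
Lemma d_pow n x : derivable_pt_lim (fun t => t ^ n) x (INR n * x ^ pred n).
Proof. apply derivable_pt_lim_pow. Qed.
Lemma d_exp f x df : derivable_pt_lim f x df -> derivable_pt_lim (fun t => exp (f t)) x (exp (f x) * df).
Proof. intro H. apply d_comp; auto. apply derivable_pt_lim_exp. Qed.
Lemma d_rpow f x df e : 0 < f x -> derivable_pt_lim f x df ->
  derivable_pt_lim (fun t => Rpower (f t) e) x (e * Rpower (f x) (e - 1) * df).
Proof. intros H1 H. apply (d_comp f (fun y => Rpower y e)); auto. apply derivable_pt_lim_power; auto. Qed.
Lemma d_sq f x df : derivable_pt_lim f x df -> derivable_pt_lim (fun t => f t * f t) x (2 * f x * df).
Proof. intro H. eapply dl_eq. apply d_mul; eauto. ring. Qed.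

Lemma rpow_ge0 x e : 0 <= rpow x e.
Proof. unfold rpow. destruct Rlt_dec. left; apply exp_pos. lra. Qed.
Lemma rpow_pos x e : 0 < x -> rpow x e = Rpower x e.
Proof. intro H. unfold rpow. destruct Rlt_dec; [auto|lra]. Qed.

Lemma pow_le1 x n : 0 <= x <= 1 -> x ^ n <= 1.
Proof. intro H. rewrite <- (pow1 n). apply pow_incr. lra. Qed.

Definition LEhyp (m : nat) (p c : R) (ub ub1 ub2 : R -> R) :=
  (forall eta, 0 < eta -> exists d, 0 < d /\ forall x, 0 < x < d -> Rabs (ub x - c) < eta * x) /\
  (forall r, 0 < r -> derivable_pt_lim ub r (ub1 r) /\ derivable_pt_lim ub1 r (ub2 r) /\
     ub2 r + (INR (S (S m)) - 1) / r * ub1 r + rpow (ub r) p = 0).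

Lemma ub_near0 m p c ub ub1 ub2 : LEhyp m p c ub ub1 ub2 ->
  forall eta d0, 0 < eta -> 0 < d0 ->
  exists xi, 0 < xi < d0 /\ Rabs (ub xi - c) < eta /\ Rabs (ub1 xi) < eta.
Proof.
  intros [Ho Hd]. apply (near0 (fun x => ub x - c) ub1); auto.
  intros x Hx. eapply dl_eq. apply d_sub. apply Hd; auto. apply d_cst. ring.
Qed.

Lemma ub1_le0 m p c ub ub1 ub2 : LEhyp m p c ub ub1 ub2 ->
  forall r, 0 < r -> ub1 r <= 0.
Proof.
  intros H r Hr. destruct H as [Ho Hd] eqn:EH.
  set (Q := fun y => y ^ (S m) * ub1 y).
  assert (HQ : forall y, 0 < y -> derivable_pt_lim Q y (- (y ^ (S m) * rpow (ub y) p))).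
  { intros y Hy. destruct (Hd y Hy) as [H1 [H2 H3]]. eapply dl_eq.
    apply d_mul. apply d_pow. exact H2.
    rewrite !S_INR in H3. simpl pred. simpl pow in *.
    assert (ub2 y = - ((INR m + 1 + 1 - 1) / y * ub1 y + rpow (ub y) p)) by lra.
    rewrite H0. rewrite S_INR. change (y ^ S m) with (y * y ^ m). field. lra. }
  destruct (Rle_or_lt (ub1 r) 0) as [|Hc]; auto. exfalso.
  assert (Qr : 0 < Q r). { unfold Q. apply Rmult_lt_0_compat; auto. apply pow_lt; auto. }
  destruct (ub_near0 m p c ub ub1 ub2 H (Q r) (Rmin r 1)) as [xi [Hxi [_ Hx1]]]; auto.
  { apply Rmin_pos; lra. }
  assert (Hxr : xi < r /\ xi < 1). { split; eapply Rlt_le_trans; try apply Hxi; [apply Rmin_l|apply Rmin_r]. }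
  assert (Q r <= Q xi).
  { apply mono_le with (fun y => - (y ^ (S m) * rpow (ub y) p)). lra.
    intros y Hy; apply HQ; lra.
    intros y Hy. assert (0 <= y ^ (S m) * rpow (ub y) p).
    { apply Rmult_le_pos. apply pow_le; lra. apply rpow_ge0. } lra. }
  assert (Q xi <= Rabs (ub1 xi)).
  { unfold Q. assert (Hq1 : 0 < xi ^ (S m) <= 1). split. apply pow_lt; lra. apply pow_le1; lra.
    destruct Hq1 as [H0a H0b]. set (t := xi ^ S m) in *.
    destruct (Rle_or_lt 0 (ub1 xi)). rewrite Rabs_right by lra. nra.
    rewrite Rabs_left by lra. nra. }
  lra.
Qed.

Lemma ub_noninc m p c ub ub1 ub2 : LEhyp m p c ub ub1 ub2 ->
  forall x y, 0 < x -> x <= y -> ub y <= ub x.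
Proof.
  intros H x y Hx Hxy. apply mono_le with ub1; auto.
  intros z Hz; apply (proj2 H); lra.
  intros z Hz; apply (ub1_le0 m p c ub ub1 ub2 H); lra.
Qed.

Lemma ub_le_c m p c ub ub1 ub2 : LEhyp m p c ub ub1 ub2 ->
  forall r, 0 < r -> ub r <= c.
Proof.
  intros H r Hr. destruct (Rle_or_lt (ub r) c) as [|Hc]; auto. exfalso.
  destruct (proj1 H ((ub r - c) / (2 * r))) as [d [Hd Hx]].
  { apply Rdiv_lt_0_compat; lra. }
  set (x := Rmin d r / 2).
  assert (0 < x /\ x < d /\ x < r) as [X1 [X2 X3]].
  { unfold x, Rmin; destruct Rle_dec; lra. }
  specialize (Hx x (conj X1 X2)).
  assert (ub r <= ub x) by (apply (ub_noninc m p c ub ub1 ub2 H); lra).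
  assert ((ub r - c) / (2 * r) * x < (ub r - c) / 2).
  { unfold Rdiv. rewrite Rinv_mult. apply Rmult_lt_reg_r with (2 * r). lra.
    field_simplify; try lra. nra. }
  apply Rabs_def2 in Hx. lra.
Qed.

Lemma Rabs_le_inv a b : Rabs a <= b -> - b <= a <= b.
Proof. unfold Rabs; destruct Rcase_abs; lra. Qed.

Lemma cont_eps f x : continuity_pt f x -> forall eps, 0 < eps ->
  exists d, 0 < d /\ forall y, Rabs (y - x) < d -> Rabs (f y - f x) < eps.
Proof.
  intros H eps He. destruct (H eps He) as [d [Hd Hy]]. exists d; split; auto.
  intros y Hyx. destruct (Req_dec x y) as [<-|Hne].
  - rewrite Rminus_diag, Rabs_R0; auto.
  - apply (Hy y). split. split; [exact I|auto]. exact Hyx.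
Qed.

Lemma dl_cont_eps f x l : derivable_pt_lim f x l -> forall eps, 0 < eps ->
  exists d, 0 < d /\ forall y, Rabs (y - x) < d -> Rabs (f y - f x) < eps.
Proof. intro H. apply cont_eps. apply dl_cont with l; auto. Qed.

Definition Poh (m : nat) (p : R) (ub ub1 : R -> R) (x : R) :=
  x ^ (S (S m)) * (ub1 x * ub1 x) / 2 + x ^ (S (S m)) * Rpower (ub x) (p + 1) / (p + 1)
  + (INR (S (S m)) - 2) / 2 * (x ^ (S m) * ub x * ub1 x).

Lemma Poh_deriv m p c ub ub1 ub2 : LEhyp m p c ub ub1 ub2 -> 1 < p ->
  forall y, 0 < y -> 0 < ub y ->
  derivable_pt_lim (Poh m p ub ub1) y
    (y ^ (S m) * Rpower (ub y) (p + 1) * (INR (S (S m)) / (p + 1) - (INR (S (S m)) - 2) / 2)).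
Proof.
  intros [Ho Hd] Hp y Hy Hu. destruct (Hd y Hy) as [H1 [H2 H3]].
  unfold Poh. eapply dl_eq.
  - apply d_add. apply d_add.
    + apply (d_mul (fun x => x ^ (S (S m)) * (ub1 x * ub1 x)) (fun _ => / 2)).
      apply d_mul. apply d_pow. apply d_sq. exact H2. apply d_cst.
    + apply (d_mul (fun x => x ^ (S (S m)) * Rpower (ub x) (p + 1)) (fun _ => / (p + 1))).
      apply d_mul. apply d_pow. apply d_rpow. exact Hu. exact H1. apply d_cst.
    + apply d_scal. apply d_mul. apply d_mul. apply d_pow. exact H1. exact H2.
  - rewrite rpow_pos in H3 by auto.
    replace (p + 1 - 1) with p by ring.
    replace (Rpower (ub y) (p + 1)) with (Rpower (ub y) p * ub y)
      by (rewrite Rpower_plus, Rpower_1; auto).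
    assert (E2 : ub2 y = - ((INR (S (S m)) - 1) / y * ub1 y + Rpower (ub y) p)) by lra.
    rewrite E2. cbv beta. simpl pred. rewrite !S_INR.
    change (y ^ S (S m)) with (y * (y * y ^ m)). change (y ^ S m) with (y * y ^ m).
    field. lra.
Qed.

Lemma ub_pos m p c ub ub1 ub2 : LEhyp m p c ub ub1 ub2 -> 0 < c -> 1 < p ->
  INR (S (S m)) / (p + 1) - (INR (S (S m)) - 2) / 2 < 0 ->
  forall r, 0 < r -> 0 < ub r.
Proof.
  intros H Hc Hp Hk r1 Hr1. destruct (Rlt_or_le 0 (ub r1)) as [|Hneg]; auto. exfalso.
  destruct H as [Ho Hd] eqn:EH.
  set (Sset := fun x => 0 < x /\ 0 < ub x).
  destruct (Ho 1 Rlt_0_1) as [d0 [Hd0 Hx0]].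
  set (x0 := Rmin d0 c / 2).
  assert (X0 : 0 < x0 /\ x0 < d0 /\ x0 <= c / 2) by (unfold x0, Rmin; destruct Rle_dec; lra).
  assert (Sx0 : Sset x0).
  { split. lra. specialize (Hx0 x0 ltac:(lra)). apply Rabs_def2 in Hx0. lra. }
  assert (Hub : forall x, Sset x -> x <= r1).
  { intros x [Hx Hux]. destruct (Rle_or_lt x r1); auto.
    assert (ub x <= ub r1) by (apply (ub_noninc m p c ub ub1 ub2 H); lra). lra. }
  destruct (completeness Sset) as [R0 [HR0u HR0l]].
  { exists r1. intros x Hx; apply Hub; auto. }
  { exists x0; auto. }
  assert (R0pos : x0 <= R0) by (apply HR0u; auto).
  assert (R0le : R0 <= r1) by (apply HR0l; intros x Hx; apply Hub; auto).
  assert (Hpos : forall y, 0 < y < R0 -> 0 < ub y).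
  { intros y Hy. destruct (Rlt_or_le 0 (ub y)) as [|Hy2]; auto. exfalso.
    assert (R0 <= y); [|lra]. apply HR0l. intros x [Hx Hux].
    destruct (Rle_or_lt x y); auto.
    assert (ub x <= ub y) by (apply (ub_noninc m p c ub ub1 ub2 H); lra). lra. }
  destruct (Hd R0 ltac:(lra)) as [HdR0 [HdR0' _]].
  assert (HR0z : ub R0 = 0).
  { destruct (Rtotal_order (ub R0) 0) as [Hl|[He|Hg]]; auto; exfalso.
    - destruct (dl_cont_eps ub R0 _ HdR0 (- ub R0)) as [a [Ha Hy]]; [lra|].
      set (y := R0 - Rmin a R0 / 2).
      assert (0 < y < R0) by (unfold y, Rmin; destruct Rle_dec; lra).
      specialize (Hpos y H0). specialize (Hy y).
      assert (Rabs (y - R0) < a) by (unfold y, Rmin; destruct Rle_dec; rewrite Rabs_left; lra).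
      specialize (Hy H1). apply Rabs_def2 in Hy. lra.
    - destruct (dl_cont_eps ub R0 _ HdR0 (ub R0)) as [a [Ha Hy]]; [lra|].
      set (y := R0 + a / 2).
      assert (Rabs (y - R0) < a) by (unfold y; rewrite Rabs_right; lra).
      specialize (Hy y H0). apply Rabs_def2 in Hy.
      assert (y <= R0) by (apply HR0u; split; [unfold y; lra | lra]). unfold y in H1; lra. }
  set (kap := INR (S (S m)) / (p + 1) - (INR (S (S m)) - 2) / 2).
  set (P := Poh m p ub ub1).
  assert (HPd : forall y, 0 < y < R0 -> derivable_pt_lim P y
     (y ^ (S m) * Rpower (ub y) (p + 1) * kap)).
  { intros y Hy. apply (Poh_deriv m p c ub ub1 ub2 H Hp); try lra. apply Hpos; auto. }
  assert (HPn : forall y, 0 < y < R0 -> y ^ (S m) * Rpower (ub y) (p + 1) * kap < 0).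
  { intros y Hy. assert (0 < y ^ (S m) * Rpower (ub y) (p + 1)).
    apply Rmult_lt_0_compat. apply pow_lt; lra. apply exp_pos. fold kap in Hk. nra. }
  set (dd := P (R0 / 4) - P (R0 / 2)).
  assert (Hdd : 0 < dd).
  { unfold dd. assert (P (R0/2) < P (R0/4)); [|lra].
    apply mono_lt with (fun y => y ^ (S m) * Rpower (ub y) (p + 1) * kap). lra.
    intros; apply HPd; lra. intros; apply HPn; lra. }
  set (K := INR (S (S m))).
  assert (HK : 2 <= K) by (unfold K; rewrite !S_INR; pose proof (pos_INR m); lra).
  set (F := Rpower c (p + 1) / (p + 1)).
  assert (HF : 0 < F) by (unfold F; apply Rdiv_lt_0_compat; [apply exp_pos|lra]).
  set (eta := Rmin 1 (dd / (4 * (1 + K * c)))).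
  assert (Heta : 0 < eta /\ eta <= 1 /\ eta * (1 + K * c) <= dd / 4).
  { assert (HD : 0 < 1 + K * c) by nra.
    assert (He2 : 0 < dd / (4 * (1 + K * c))) by (apply Rdiv_lt_0_compat; lra).
    assert (He3 : dd / (4 * (1 + K * c)) * (1 + K * c) = dd / 4) by (field; lra).
    assert (eta <= dd / (4 * (1 + K * c))) by apply Rmin_r.
    assert (eta <= 1) by apply Rmin_l.
    assert (0 < eta) by (apply Rmin_pos; lra).
    repeat split; try lra. nra. }
  destruct (ub_near0 m p c ub ub1 ub2 H eta (Rmin (Rmin (R0 / 4) 1) (dd / (4 * F)))) as [xi [Hxi [Hxu Hxu1]]].
  { tauto. }
  { apply Rmin_pos. apply Rmin_pos; lra. apply Rdiv_lt_0_compat; lra. }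
  assert (Hxi2 : xi < R0 / 4 /\ xi < 1 /\ xi < dd / (4 * F)).
  { revert Hxi. unfold Rmin; repeat destruct Rle_dec; intros; lra. }
  assert (HPxi : P xi < dd / 2).
  { unfold P, Poh. fold K.
    assert (Hub_xi : 0 < ub xi <= c).
    { split. apply Hpos; lra. apply (ub_le_c m p c ub ub1 ub2 H); lra. }
    assert (A1 : xi ^ (S (S m)) <= xi).
    { change (xi ^ S (S m)) with (xi * xi ^ (S m)).
      assert (xi ^ S m <= 1) by (apply pow_le1; lra). assert (0 <= xi ^ S m) by (apply pow_le; lra). nra. }
    assert (A1' : 0 <= xi ^ (S (S m))) by (apply pow_le; lra).
    assert (A2 : 0 <= xi ^ (S m) <= 1) by (split; [apply pow_le; lra| apply pow_le1; lra]).
    assert (A3 : Rpower (ub xi) (p + 1) / (p + 1) <= F).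
    { unfold F, Rdiv. apply Rmult_le_compat_r. left; apply Rinv_0_lt_compat; lra.
      apply Rle_Rpower_l; lra. }
    assert (A4 : ub1 xi * ub1 xi <= eta).
    { apply Rabs_def2 in Hxu1. nra. }
    assert (A5 : Rabs (xi ^ S m * ub xi * ub1 xi) <= c * eta).
    { rewrite !Rabs_mult. rewrite (Rabs_right (xi ^ S m)) by lra. rewrite (Rabs_right (ub xi)) by lra.
      assert (0 <= Rabs (ub1 xi)) by apply Rabs_pos.
      assert (ub xi * Rabs (ub1 xi) <= c * eta) by (apply Rmult_le_compat; lra).
      assert (0 <= ub xi * Rabs (ub1 xi)) by (apply Rmult_le_pos; lra).
      rewrite Rmult_assoc. assert (0 <= c * eta) by lra. nra. }
    apply Rabs_le_inv in A5.
    assert (A6 : xi * F < dd / 4).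
    { apply Rmult_lt_reg_r with (/ F). apply Rinv_0_lt_compat; lra.
      replace (xi * F * / F) with xi by (field; lra).
      replace (dd / 4 * / F) with (dd / (4 * F)) by (field; lra). lra. }
    assert (xi ^ S (S m) * (ub1 xi * ub1 xi) / 2 <= eta) by nra.
    assert (xi ^ S (S m) * Rpower (ub xi) (p + 1) / (p + 1) <= xi * F).
    { unfold Rdiv. rewrite Rmult_assoc. fold (Rdiv (Rpower (ub xi) (p + 1)) (p + 1)).
      assert (0 <= Rpower (ub xi) (p + 1) / (p + 1)).
      { apply Rmult_le_pos. left; apply exp_pos. left; apply Rinv_0_lt_compat; lra. } nra. }
    assert ((K - 2) / 2 * (xi ^ S m * ub xi * ub1 xi) <= K * c * eta).
    { assert (0 <= (K - 2) / 2 <= K) by lra. nra. }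
    nra. }
  assert (HPle : P (R0 / 4) <= P xi).
  { apply mono_le with (fun y => y ^ (S m) * Rpower (ub y) (p + 1) * kap). lra.
    intros; apply HPd; lra. intros; left; apply HPn; lra. }
  set (T := fun x => x ^ (S m) * ub x * ub1 x).
  assert (HTd : derivable_pt_lim T R0 ((INR (S m) * R0 ^ pred (S m) * ub R0 + R0 ^ (S m) * ub1 R0) * ub1 R0
                 + R0 ^ (S m) * ub R0 * ub2 R0)).
  { unfold T. apply (d_mul (fun x => x ^ S m * ub x) ub1). apply (d_mul (fun x => x ^ S m) ub). apply d_pow. auto. auto. }
  destruct (dl_cont_eps T R0 _ HTd (dd / (2 * K))) as [a [Ha HT]].
  { apply Rdiv_lt_0_compat; lra. }
  set (x := R0 - Rmin a (R0 / 2) / 2).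
  assert (Hx : R0 / 2 < x < R0 /\ Rabs (x - R0) < a).
  { unfold x, Rmin; destruct Rle_dec; split; try split; try lra; rewrite Rabs_left; lra. }
  specialize (HT x (proj2 Hx)).
  assert (T R0 = 0) by (unfold T; rewrite HR0z; ring).
  rewrite H0, Rminus_0_r in HT. apply Rabs_def2 in HT.
  assert (HPx : P x <= P (R0 / 2)).
  { apply mono_le with (fun y => y ^ (S m) * Rpower (ub y) (p + 1) * kap). lra.
    intros; apply HPd; lra. intros; left; apply HPn; lra. }
  assert (HPx2 : (K - 2) / 2 * T x <= P x).
  { unfold P, Poh, T. fold K.
    assert (0 <= x ^ S (S m) * (ub1 x * ub1 x) / 2).
    { apply Rmult_le_pos. apply Rmult_le_pos. apply pow_le; lra.
      apply Rle_0_sqr. lra. }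
    assert (0 <= x ^ S (S m) * Rpower (ub x) (p + 1) / (p + 1)).
    { apply Rmult_le_pos. apply Rmult_le_pos. apply pow_le; lra. left; apply exp_pos.
      left; apply Rinv_0_lt_compat; lra. }
    lra. }
  assert (HTx : - (dd / 2) < (K - 2) / 2 * T x).
  { assert (- (dd / (2 * K)) * K = - (dd / 2)) by (field; lra).
    assert (0 <= (K - 2) / 2 <= K) by lra.
    destruct (Rle_or_lt 0 (T x)). nra.
    assert (K * - (dd / (2 * K)) < (K - 2)/2 * T x); [|lra].
    nra. }
  unfold dd in *. lra.
Qed.

Lemma gronwall (E dE : R -> R) C d2 a b : 0 <= C -> 0 <= d2 -> a <= b ->
  (forall x, a <= x <= b -> derivable_pt_lim E x (dE x)) ->
  (forall x, a <= x <= b -> dE x <= C * E x + d2) ->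
  E b <= (E a + d2 * (b - a)) * exp (C * (b - a)).
Proof.
  intros HC Hd Hab HE Hb.
  set (F := fun x => E x * exp (- C * (x - a)) - d2 * (x - a)).
  assert (F b <= F a).
  { apply mono_le with (fun x => dE x * exp (- C * (x - a)) + E x * (exp (- C * (x - a)) * (- C * (1 - 0))) - d2 * (1 - 0)); auto.
    - intros x Hx. unfold F.
      apply (d_sub (fun t => E t * exp (- C * (t - a))) (fun t => d2 * (t - a))).
      apply (d_mul E (fun t => exp (- C * (t - a)))). apply HE; auto.
      apply (d_exp (fun t => - C * (t - a))). apply (d_scal (- C) (fun t => t - a)).
      apply (d_sub (fun t => t) (fun _ => a)). apply d_id. apply d_cst.
      apply (d_scal d2 (fun t => t - a)). apply (d_sub (fun t => t) (fun _ => a)). apply d_id. apply d_cst.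
    - intros x Hx. assert (0 < exp (- C * (x - a)) <= 1).
      { split. apply exp_pos. rewrite <- exp_0. destruct (Req_dec (- C * (x - a)) 0) as [->|]; [lra|].
        left. apply exp_increasing. nra. }
      specialize (Hb x Hx). nra. }
  unfold F in H. replace (a - a) with 0 in H by ring.
  rewrite Rmult_0_r, exp_0 in H.
  assert (E b * exp (- C * (b - a)) <= E a + d2 * (b - a)) by lra.
  replace (E b) with (E b * exp (- C * (b - a)) * exp (C * (b - a))).
  apply Rmult_le_compat_r. left; apply exp_pos. lra.
  rewrite Rmult_assoc, <- exp_plus. replace (- C * (b - a) + C * (b - a)) with 0 by ring.
  rewrite exp_0; ring.
Qed.

Lemma sq_lt_abs x b : 0 < b -> x * x < b * b -> Rabs x < b.
Proof. intros Hb H. unfold Rabs; destruct Rcase_abs; nra. Qed.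

Lemma exp_le_mono x y : x <= y -> exp x <= exp y.
Proof. intro H. destruct (Rle_lt_or_eq_dec _ _ H) as [H1| ->]. left; apply exp_increasing; auto. lra. Qed.

Lemma abs_sq x : Rabs x * Rabs x = x * x.
Proof. rewrite <- Rabs_mult. apply Rabs_right. apply Rle_ge, Rle_0_sqr. Qed.

Lemma compare (k Rb b L d th : R) (v v1 v2 ub ub1 ub2 : R -> R) :
  0 <= k -> 0 < Rb -> 0 < b -> 0 <= L -> 0 <= d -> 0 < th ->
  (forall x, 0 < x -> derivable_pt_lim v x (v1 x) /\ derivable_pt_lim v1 x (v2 x) /\
     derivable_pt_lim ub x (ub1 x) /\ derivable_pt_lim ub1 x (ub2 x)) ->
  (forall x, 0 < x <= Rb -> Rabs (v x - ub x) < b ->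
     Rabs ((v2 x + k / x * v1 x) - (ub2 x + k / x * ub1 x)) <= d + L * Rabs (v x - ub x)) ->
  (forall eta d0, 0 < eta -> 0 < d0 -> exists xi, 0 < xi < d0 /\
     Rabs (v xi - ub xi) < eta /\ Rabs (v1 xi - ub1 xi) < eta) ->
  (th + d * d * Rb) * exp ((L + 2) * Rb) < b * b ->
  forall x, 0 < x <= Rb ->
    (v x - ub x) * (v x - ub x) + (v1 x - ub1 x) * (v1 x - ub1 x)
      <= (th + d * d * Rb) * exp ((L + 2) * Rb).
Proof.
  intros Hk HR Hb HL Hd Hth Hder Hg H0 Hsm rs Hrs.
  set (w := fun x => v x - ub x). set (w1 := fun x => v1 x - ub1 x).
  set (E := fun x => w x * w x + w1 x * w1 x).
  set (C := L + 2).
  assert (Hw : forall x, 0 < x -> derivable_pt_lim w x (w1 x)).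
  { intros x Hx. destruct (Hder x Hx) as [A1 [A2 [A3 A4]]]. apply d_sub; auto. }
  assert (HE : forall x, 0 < x -> derivable_pt_lim E x
     (2 * w x * w1 x + 2 * w1 x * (v2 x - ub2 x))).
  { intros x Hx. destruct (Hder x Hx) as [A1 [A2 [A3 A4]]]. unfold E. apply d_add.
    apply d_sq; auto. apply d_sq. apply d_sub; auto. }
  assert (HdE : forall x, 0 < x <= Rb -> Rabs (w x) < b ->
     2 * w x * w1 x + 2 * w1 x * (v2 x - ub2 x) <= C * E x + d * d).
  { intros x Hx Hwx. specialize (Hg x Hx Hwx). fold (w x) in Hg.
    set (g := (v2 x + k / x * v1 x) - (ub2 x + k / x * ub1 x)) in Hg.
    assert (v2 x - ub2 x = g - k / x * w1 x) by (unfold g, w1; ring).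
    rewrite H. unfold E, C.
    assert (0 <= k / x * (w1 x * w1 x)).
    { apply Rmult_le_pos. apply Rmult_le_pos; [lra| left; apply Rinv_0_lt_compat; lra]. apply Rle_0_sqr. }
    assert (2 * w1 x * g <= 2 * Rabs (w1 x) * (d + L * Rabs (w x))).
    { assert (w1 x * g <= Rabs (w1 x) * Rabs g).
      { rewrite <- Rabs_mult. apply Rle_abs. }
      assert (Rabs (w1 x) * Rabs g <= Rabs (w1 x) * (d + L * Rabs (w x))).
      { apply Rmult_le_compat_l; auto. apply Rabs_pos. } lra. }
    assert (w x * w1 x <= Rabs (w x) * Rabs (w1 x)) by (rewrite <- Rabs_mult; apply Rle_abs).
    assert (Q1 := abs_sq (w x)). assert (Q2 := abs_sq (w1 x)).
    set (e := Rabs (w x)) in *. set (a := Rabs (w1 x)) in *.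
    assert (0 <= e) by apply Rabs_pos. assert (0 <= a) by apply Rabs_pos.
    assert (2 * e * a <= e * e + a * a) by (pose proof (Rle_0_sqr (e - a)); unfold Rsqr in *; nra).
    assert (2 * a * d <= a * a + d * d) by (pose proof (Rle_0_sqr (a - d)); unfold Rsqr in *; nra).
    assert (2 * a * L * e <= L * (a * a + e * e)).
    { pose proof (Rle_0_sqr (a - e)); unfold Rsqr in *.
      apply Rmult_le_compat_l with (r := L) in H5; auto. nra. }
    nra. }
  assert (HC : 0 <= C) by (unfold C; lra).
  set (eta := Rmin (Rmin 1 (th / 2)) b).
  assert (Heta : 0 < eta /\ eta <= 1 /\ eta <= th / 2 /\ eta <= b).
  { assert (eta <= Rmin 1 (th/2)) by apply Rmin_l. assert (eta <= b) by apply Rmin_r.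
    assert (Rmin 1 (th/2) <= 1) by apply Rmin_l. assert (Rmin 1 (th/2) <= th/2) by apply Rmin_r.
    assert (0 < eta) by (apply Rmin_pos; [apply Rmin_pos|]; lra). lra. }
  destruct (H0 eta rs (proj1 Heta) (proj1 Hrs)) as [xi [Hxi [Hwxi Hw1xi]]].
  fold (w xi) in Hwxi. fold (w1 xi) in Hw1xi.
  assert (HExi : E xi < th).
  { unfold E. rewrite <- (abs_sq (w xi)), <- (abs_sq (w1 xi)).
    assert (0 <= Rabs (w xi)) by apply Rabs_pos. assert (0 <= Rabs (w1 xi)) by apply Rabs_pos.
    assert (Rabs (w xi) * Rabs (w xi) <= eta * eta) by (apply Rmult_le_compat; lra).
    assert (Rabs (w1 xi) * Rabs (w1 xi) <= eta * eta) by (apply Rmult_le_compat; lra).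
    assert (eta * eta <= eta) by nra.
    assert (Rabs (w xi) * Rabs (w xi) < eta * eta) by (apply Rmult_le_0_lt_compat; lra). lra. }
  assert (HE0 : forall x, 0 <= E x).
  { intro x. unfold E. assert (0 <= w x * w x) by apply Rle_0_sqr.
    assert (0 <= w1 x * w1 x) by apply Rle_0_sqr. lra. }
  set (Thp := (E xi + d * d * Rb) * exp (C * Rb)).
  assert (HThp : Thp < b * b).
  { unfold Thp. eapply Rle_lt_trans; [|exact Hsm]. apply Rmult_le_compat_r.
    left; apply exp_pos. lra. }
  set (G := fun x => xi <= x <= rs /\ forall y, xi <= y <= x -> Rabs (w y) < b).
  destruct (completeness G) as [sg [Hsu Hsl]].
  { exists rs. intros x Hx. apply Hx. }
  { exists xi. split. lra. intros y Hy. replace y with xi by lra. lra. }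
  assert (Hsg1 : xi <= sg) by (apply Hsu; split; [lra|]; intros y Hy; replace y with xi by lra; lra).
  assert (Hsg2 : sg <= rs) by (apply Hsl; intros x Hx; apply Hx).
  assert (ClA : forall y, xi <= y < sg -> forall z, xi <= z <= y -> Rabs (w z) < b).
  { intros y Hy z Hz. destruct (classic (exists x, G x /\ y < x)) as [[x [Gx Hx]]|Hn].
    - apply (proj2 Gx). lra.
    - exfalso. assert (sg <= y); [|lra]. apply Hsl. intros x Gx.
      destruct (Rle_or_lt x y); auto. exfalso; apply Hn; exists x; auto. }
  assert (ClB : forall y, xi <= y < sg -> E y <= Thp).
  { intros y Hy. eapply Rle_trans.
    apply (gronwall E (fun x => 2 * w x * w1 x + 2 * w1 x * (v2 x - ub2 x)) C (d * d) xi y); auto.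
    apply Rle_0_sqr. lra.
    intros x Hx. apply HE. lra.
    intros x Hx. apply HdE. lra. apply (ClA y Hy). lra.
    unfold Thp. apply Rmult_le_compat. 
    assert (0 <= d * d) by apply Rle_0_sqr. assert (0 <= d * d * (y - xi)) by (apply Rmult_le_pos; lra).
    specialize (HE0 xi). lra. left; apply exp_pos.
    assert (0 <= d * d) by apply Rle_0_sqr. apply Rplus_le_compat_l. apply Rmult_le_compat_l; lra.
    apply exp_le_mono. apply Rmult_le_compat_l; lra. }
  assert (ClC : E sg <= Thp).
  { destruct (Rle_lt_or_eq_dec _ _ Hsg1) as [Hlt|Heq].
    - destruct (Rle_or_lt (E sg) Thp) as [|Hgt]; auto. exfalso.
      destruct (dl_cont_eps E sg _ (HE sg ltac:(lra)) (E sg - Thp)) as [a [Ha Hy]]; [lra|].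
      set (y := sg - Rmin a (sg - xi) / 2).
      assert (Hy1 : xi <= y < sg /\ Rabs (y - sg) < a).
      { unfold y. assert (Rmin a (sg - xi) <= a) by apply Rmin_l.
        assert (Rmin a (sg - xi) <= sg - xi) by apply Rmin_r.
        assert (0 < Rmin a (sg - xi)) by (apply Rmin_pos; lra).
        split. lra. rewrite Rabs_left; lra. }
      specialize (Hy y (proj2 Hy1)). apply Rabs_def2 in Hy.
      specialize (ClB y (proj1 Hy1)). lra.
    - rewrite <- Heq. unfold Thp. specialize (HE0 xi).
      assert (1 <= exp (C * Rb)) by (rewrite <- exp_0; apply exp_le_mono; apply Rmult_le_pos; lra).
      assert (0 <= d * d * Rb) by (apply Rmult_le_pos; [apply Rle_0_sqr|lra]). nra. }
  assert (Hwsg : Rabs (w sg) < b).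
  { apply sq_lt_abs; auto. assert (0 <= w1 sg * w1 sg) by apply Rle_0_sqr. unfold E in ClC. lra. }
  assert (ClD : sg = rs).
  { destruct (Rle_lt_or_eq_dec _ _ Hsg2) as [Hlt|]; auto. exfalso.
    destruct (dl_cont_eps w sg _ (Hw sg ltac:(lra)) (b - Rabs (w sg))) as [a [Ha Hy]]; [lra|].
    set (x' := Rmin (sg + a / 2) rs).
    assert (Hx' : sg < x' <= rs /\ x' <= sg + a / 2).
    { unfold x'. assert (Rmin (sg + a/2) rs <= rs) by apply Rmin_r.
      assert (Rmin (sg + a/2) rs <= sg + a/2) by apply Rmin_l.
      unfold Rmin; destruct Rle_dec; lra. }
    assert (G x').
    { split. lra. intros y Hy1. destruct (Rlt_or_le y sg).
      - apply (ClA y). lra. lra.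
      - assert (Rabs (y - sg) < a) by (rewrite Rabs_right; lra).
        specialize (Hy y H1).
        assert (Rabs (w y) <= Rabs (w y - w sg) + Rabs (w sg)).
        { replace (w y) with ((w y - w sg) + w sg) at 1 by ring. apply Rabs_triang. }
        lra. }
    assert (x' <= sg) by (apply Hsu; auto). lra. }
  subst sg. fold (w rs) (w1 rs). fold (E rs).
  eapply Rle_trans. exact ClC. unfold Thp. fold C.
  apply Rmult_le_compat_r. left; apply exp_pos. lra.
Qed.

Ltac pos := repeat (apply Rmult_lt_0_compat || apply Rinv_0_lt_compat || apply exp_pos
   || apply pow_lt || unfold Rdiv || unfold Rpower); try lra; auto.

Lemma Rpower_pos x e : 0 < Rpower x e.
Proof. apply exp_pos. Qed.

Ltac solve_pos := repeat match goal with
  | |- 0 < _ * _ => apply Rmult_lt_0_compat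
  | |- 0 < / _ => apply Rinv_0_lt_compat
  | |- 0 < Rpower _ _ => apply Rpower_pos
  | |- 0 < _ ^ _ => apply pow_lt
  | |- 0 < exp _ => apply exp_pos
  end; try assumption; try lra.

Lemma ln_Rpower x e : ln (Rpower x e) = e * ln x.
Proof. unfold Rpower. apply ln_exp. Qed.

Lemma coef_id p q g r X : 1 < p -> 0 < g -> 0 < X ->
  let c := Rpower 2 (- q / (p - 1)) in
  let lam := exp (- ln g / (2 / (p - 1))) in
  c * lam ^ 2 / g * Rpower (A r) (- q) * Rpower (g / c * X) p
  = Rpower (1 + r ^ 2) q * Rpower X p.
Proof.
  intros Hp Hg HX c lam.
  assert (Hc : 0 < c) by apply exp_pos. assert (Hl : 0 < lam) by apply exp_pos.
  assert (Hr : 0 < 1 + r ^ 2) by (pose proof (pow2_ge_0 r); lra).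
  assert (HA : 0 < A r) by (unfold A; apply Rdiv_lt_0_compat; lra).
  apply ln_inv; unfold Rdiv; try solve_pos.
  rewrite !ln_mult; try solve_pos.
  rewrite !ln_Rpower. rewrite !ln_mult; try solve_pos.
  rewrite !ln_Rinv; try solve_pos.
  unfold c, lam. rewrite !ln_Rpower. simpl pow. rewrite Rmult_1_r.
  rewrite ln_mult by apply exp_pos. rewrite ln_exp.
  unfold A. unfold Rdiv. rewrite ln_mult by (try apply Rinv_0_lt_compat; lra).
  rewrite ln_Rinv by auto.
  replace (r * (r * 1)) with (r ^ 2) by ring. field. lra.
Qed.

Lemma d_lin f k lam x l : derivable_pt_lim f (lam * x) l ->
  derivable_pt_lim (fun y => k * f (lam * y)) x (k * lam * l).
Proof.
  intro H. eapply dl_eq. apply (d_scal k (fun y => f (lam * y))).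
  apply (d_comp (fun y => lam * y) f). apply (d_scal lam (fun y => y)). apply d_id.
  exact H. ring.
Qed.

Lemma spow_pos U p : 0 < U -> spow U p = Rpower U p.
Proof.
  intro H. unfold spow. rewrite Rabs_right by lra. rewrite rpow_pos by auto.
  replace p with ((p - 1) + 1) at 2 by ring. rewrite Rpower_plus, Rpower_1; auto.
Qed.

Lemma v_props (N : nat) p q g (u u1 u2 : R -> R) : 1 < p -> 0 < g ->
  (forall r, 0 < r -> derivable_pt_lim u r (u1 r) /\ derivable_pt_lim u1 r (u2 r) /\
     u2 r + (INR N - 1) / r * u1 r + INR N * (INR N - 2) / 4 * (A r) ^ 2 * u r
       + Rpower (A r) (- q) * spow (u r) p = 0) ->
  let c := Rpower 2 (- q / (p - 1)) in
  let lam := exp (- ln g / (2 / (p - 1))) in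
  forall x, 0 < x ->
  derivable_pt_lim (fun y => c / g * u (lam * y)) x (c / g * lam * u1 (lam * x)) /\
  derivable_pt_lim (fun y => c / g * lam * u1 (lam * y)) x (c / g * lam * lam * u2 (lam * x)) /\
  (0 < c / g * u (lam * x) ->
   c / g * lam * lam * u2 (lam * x) + (INR N - 1) / x * (c / g * lam * u1 (lam * x))
   + lam ^ 2 * (INR N * (INR N - 2) / 4) * (A (lam * x)) ^ 2 * (c / g * u (lam * x))
   + Rpower (1 + (lam * x) ^ 2) q * Rpower (c / g * u (lam * x)) p = 0).
Proof.
  intros Hp Hg Hu c lam x Hx.
  assert (Hc : 0 < c) by apply exp_pos. assert (Hl : 0 < lam) by apply exp_pos.
  assert (Hr : 0 < lam * x) by (apply Rmult_lt_0_compat; auto).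
  destruct (Hu (lam * x) Hr) as [H1 [H2 H3]].
  split; [|split].
  - apply d_lin; auto.
  - apply d_lin; auto.
  - intro Hv. assert (HU : 0 < u (lam * x)).
    { assert (0 < c / g) by (apply Rdiv_lt_0_compat; auto).
      apply Rmult_lt_reg_l with (c / g); auto. lra. }
    rewrite spow_pos in H3 by auto.
    pose proof (coef_id p q g (lam * x) (c / g * u (lam * x)) Hp Hg ltac:(apply Rmult_lt_0_compat; [apply Rdiv_lt_0_compat|]; auto)) as HC.
    fold c lam in HC.
    replace (g / c * (c / g * u (lam * x))) with (u (lam * x)) in HC by (field; split; lra).
    rewrite <- HC.
    set (U := u (lam * x)) in *. set (U1 := u1 (lam * x)) in *. set (U2 := u2 (lam * x)) in *.
    set (RA := Rpower (A (lam * x)) (- q)) in *. set (RU := Rpower U p) in *.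
    set (AA := A (lam * x)) in *.
    transitivity (c * lam ^ 2 / g * (U2 + (INR N - 1) / (lam * x) * U1 + INR N * (INR N - 2) / 4 * AA ^ 2 * U + RA * RU)).
    + replace (g / c * (c / g * U)) with U by (field; split; lra). fold RU. field. repeat split; lra.
    + rewrite H3. ring.
Qed.

Lemma lip_rpow p bb M : 1 <= p -> 0 < bb ->
  forall x y, bb <= x <= M -> bb <= y <= M ->
  Rabs (Rpower x p - Rpower y p) <= p * Rpower M (p - 1) * Rabs (x - y).
Proof.
  intros Hp Hb.
  assert (Hgen : forall x y, bb <= x <= M -> bb <= y <= M -> x <= y ->
    Rabs (Rpower x p - Rpower y p) <= p * Rpower M (p - 1) * Rabs (x - y)).
  { intros x y Hx Hy Hxy.
    destruct (mvt_closed (fun t => Rpower t p) (fun t => p * Rpower t (p - 1)) x y Hxy) as [z [Hz He]].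
    { intros t Ht. apply derivable_pt_lim_power. lra. }
    rewrite (Rabs_minus_sym (Rpower x p)), He, (Rabs_minus_sym x y), Rabs_mult.
    apply Rmult_le_compat_r. apply Rabs_pos.
    rewrite Rabs_right. apply Rmult_le_compat_l. lra. apply Rle_Rpower_l; lra.
    apply Rle_ge, Rmult_le_pos. lra. left; apply exp_pos. }
  intros x y Hx Hy. destruct (Rle_or_lt x y). apply Hgen; auto.
  rewrite Rabs_minus_sym, (Rabs_minus_sym x y). apply Hgen; auto; lra.
Qed.

Lemma lam_small mu : 0 < mu -> forall beta, 0 < beta ->
  exists G, 0 < G /\ forall g, G < g -> exp (- ln g / mu) ^ 2 < beta.
Proof.
  intros Hmu beta Hb. exists (exp (- mu * ln beta / 2)). split. apply exp_pos.
  intros g Hg. assert (0 < g) by (pose proof (exp_pos (- mu * ln beta / 2)); lra).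
  assert (ln (exp (- mu * ln beta / 2)) < ln g) by (apply ln_increasing; auto; apply exp_pos).
  rewrite ln_exp in H0.
  simpl. rewrite Rmult_1_r, <- exp_plus. rewrite <- (exp_ln beta) by auto.
  apply exp_increasing.
  apply Rmult_lt_reg_r with (mu / 2). apply Rdiv_lt_0_compat; lra.
  field_simplify; try lra. 
Qed.

Lemma Rpower_1_base q : Rpower 1 q = 1.
Proof. unfold Rpower. rewrite ln_1, Rmult_0_r. apply exp_0. Qed.

Lemma Rpower_cont1 q e : 0 < e -> exists al, 0 < al /\ forall t, Rabs (t - 1) < al -> Rabs (Rpower t q - 1) < e.
Proof.
  intro He. destruct (dl_cont_eps (fun t => Rpower t q) 1 _ (derivable_pt_lim_power 1 q Rlt_0_1) e He) as [al [Ha H]].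
  exists al; split; auto. intros t Ht. specialize (H t Ht). simpl in H. rewrite Rpower_1_base in H. exact H.
Qed.

Lemma d_weight (a k k' : R) (f f1 : R -> R) s :
  derivable_pt_lim f (exp (k' * s)) (f1 (exp (k' * s))) ->
  derivable_pt_lim (fun s => exp (k * s) / a * f (exp (k' * s))) s
    (exp (k * s) * k / a * f (exp (k' * s)) + exp (k * s) / a * (f1 (exp (k' * s)) * (exp (k' * s) * k'))).
Proof.
  intro H. eapply dl_eq.
  apply (d_mul (fun s => exp (k * s) / a) (fun s => f (exp (k' * s)))).
  apply (d_mul (fun s => exp (k * s)) (fun _ => / a)).
  apply (d_exp (fun s => k * s)). apply (d_scal k (fun s => s)). apply d_id. apply d_cst.
  apply (d_comp (fun s => exp (k' * s)) f).
  apply (d_exp (fun s => k' * s)). apply (d_scal k' (fun s => s)). apply d_id. exact H.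
  cbv beta. unfold Rdiv. ring.
Qed.

Theorem lemma5p2 (N : nat) (p : R) (u : R -> R -> R) (ub : R -> R)
    (Dyhat : R -> R -> R) (Dybar : R -> R) :
  (3 <= N)%nat ->
  pS N < p ->
  (forall gamma, 0 < gamma -> IVP_sol N p gamma (u gamma)) ->
  Lane_Emden_sol N p (Rpower 2 (- qexp N p / (p - 1))) ub ->
  (forall gamma, 0 < gamma -> forall s,
     derivable_pt_lim (yhat N p gamma (u gamma)) s (Dyhat gamma s)) ->
  (forall s, derivable_pt_lim (ybar N p ub) s (Dybar s)) ->
  forall s0 eps, 0 < eps ->
    exists G, 0 < G /\ forall gamma, G < gamma -> forall s, s <= s0 ->
      Rabs (yhat N p gamma (u gamma) s - ybar N p ub s) < eps /\
      Rabs (Dyhat gamma s - Dybar s) < eps.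
Proof.
  intros HN Hp Hu Hub Hdy Hdb s0 eps Heps.
  destruct N as [|[|m]]; try lia.
  assert (Hm : (1 <= m)%nat) by lia.
  set (K := INR (S (S m))).
  assert (HK : 3 <= K).
  { unfold K. rewrite !S_INR. apply le_INR in Hm. simpl in Hm. lra. }
  assert (HpS : pS (S (S m)) = (K + 2) / (K - 2)) by reflexivity.
  rewrite HpS in Hp.
  assert (HpK : K + 2 < p * (K - 2)).
  { apply Rmult_lt_compat_r with (r := K - 2) in Hp; [|lra].
    unfold Rdiv in Hp. rewrite Rmult_assoc, Rinv_l, Rmult_1_r in Hp by lra. lra. }
  assert (Hp1 : 1 < p) by nra.
  set (q := qexp (S (S m)) p).
  assert (Hq : 0 < q).
  { unfold q, qexp. fold K. rewrite HpS. apply Rmult_lt_0_compat. lra. lra. }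
  set (mu' := mu p). assert (Hmu : 0 < mu') by (unfold mu', mu; apply Rdiv_lt_0_compat; lra).
  set (a := acst (S (S m)) p). assert (Ha : 0 < a) by apply exp_pos.
  set (mm := mcst (S (S m)) p). assert (Hmm : 0 < mm) by apply exp_pos.
  set (c := Rpower 2 (- q / (p - 1))). assert (Hc : 0 < c) by apply exp_pos.
  assert (Hkap : K / (p + 1) - (K - 2) / 2 < 0).
  { assert (K / (p + 1) < (K - 2) / 2); [|lra].
    apply Rmult_lt_reg_r with (2 * (p + 1)). lra.
    field_simplify; try lra. }
  destruct Hub as [Hub0 [Hublim [ub1 [ub2 Hubd]]]].
  assert (HLE : LEhyp m p c ub ub1 ub2).
  { split. apply small_o. exact Hublim. exact Hubd. }
  pose proof (ub_pos m p c ub ub1 ub2 HLE Hc Hp1 Hkap) as Hubpos.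
  pose proof (ub_noninc m p c ub ub1 ub2 HLE) as Hubni.
  pose proof (ub_le_c m p c ub ub1 ub2 HLE) as Hublc.
  set (Rb := exp (mm * s0)). assert (HRb : 0 < Rb) by apply exp_pos.
  set (bb := ub Rb / 2). assert (Hbb : 0 < bb) by (unfold bb; pose proof (Hubpos Rb HRb); lra).
  set (M := c + bb).
  set (L := p * Rpower M (p - 1)). assert (HL : 0 <= L) by (unfold L; apply Rmult_le_pos; [lra| left; apply exp_pos]).
  set (Kc := K * (K - 2) / 4). assert (HKc : 0 <= Kc) by (unfold Kc; apply Rmult_le_pos; [nra|lra]).
  set (Z := exp (mm * mu' * s0) / a). assert (HZ : 0 < Z) by (apply Rdiv_lt_0_compat; auto; apply exp_pos).
  set (Dn := 2 * Z * (1 + mm * (mu' + Rb))).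
  assert (HDn : 0 < Dn) by (unfold Dn; assert (0 < mm * (mu' + Rb)) by (apply Rmult_lt_0_compat; lra); nra).
  set (eta := Rmin bb (eps / Dn)).
  assert (Heta : 0 < eta /\ eta <= bb /\ eta <= eps / Dn).
  { assert (0 < eps / Dn) by (apply Rdiv_lt_0_compat; auto).
    split. apply Rmin_pos; lra. split. apply Rmin_l. apply Rmin_r. }
  set (Kx := exp ((L + 2) * Rb)). assert (HKx : 0 < Kx) by apply exp_pos.
  set (th := eta * eta / (4 * Kx)). assert (Hth : 0 < th) by (unfold th; apply Rdiv_lt_0_compat; nra).
  set (d0 := Rmin 1 (eta * eta / (4 * Kx * Rb))).
  assert (Hd0 : 0 < d0 /\ d0 <= 1 /\ d0 <= eta * eta / (4 * Kx * Rb)).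
  { assert (0 < eta * eta / (4 * Kx * Rb)) by (apply Rdiv_lt_0_compat; [nra|]; apply Rmult_lt_0_compat; lra).
    split. apply Rmin_pos; lra. split. apply Rmin_l. apply Rmin_r. }
  set (RMp := Rpower M p). assert (HRMp : 0 < RMp) by apply exp_pos.
  destruct (Rpower_cont1 q (d0 / (2 * RMp))) as [al [Hal Hcont]].
  { apply Rdiv_lt_0_compat; lra. }
  set (beta := Rmin (al / (Rb * Rb + 1)) (d0 / (2 * (4 * Kc * M + 1)))).
  assert (HM : 0 < M) by (unfold M; lra).
  assert (Hbeta : 0 < beta /\ beta <= al / (Rb * Rb + 1) /\ beta <= d0 / (2 * (4 * Kc * M + 1))).
  { assert (0 < al / (Rb * Rb + 1)) by (apply Rdiv_lt_0_compat; nra).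
    assert (0 < d0 / (2 * (4 * Kc * M + 1))) by (apply Rdiv_lt_0_compat; nra).
    split. apply Rmin_pos; lra. split. apply Rmin_l. apply Rmin_r. }
  destruct (lam_small mu' Hmu beta (proj1 Hbeta)) as [G [HG HGl]].
  exists G. split; auto. intros g Hg.
  assert (Hg0 : 0 < g) by lra.
  destruct (Hu g Hg0) as [Hu0 [Hulim [u1 [u2 Hud]]]].
  pose proof (v_props (S (S m)) p q g (u g) u1 u2 Hp1 Hg0 Hud) as Hv.
  cbv zeta in Hv. fold c in Hv.
  set (lam := exp (- ln g / (2 / (p - 1)))) in Hv.
  assert (Hlam : 0 < lam) by apply exp_pos.
  assert (Hlam2 : lam ^ 2 < beta) by exact (HGl g Hg).
  set (v := fun y => c / g * u g (lam * y)).
  set (v1 := fun y => c / g * lam * u1 (lam * y)).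
  set (v2 := fun y => c / g * lam * lam * u2 (lam * y)).
  set (d := lam ^ 2 * Kc * 4 * M + (Rpower (1 + lam ^ 2 * (Rb * Rb)) q - 1) * RMp).
  assert (HB1 : forall t, 0 <= t -> 1 <= Rpower (1 + t) q).
  { intros t Ht. replace 1 with (Rpower 1 q) at 1 by apply Rpower_1_base. apply Rle_Rpower_l; lra. }
  assert (Hd : 0 <= d /\ d < d0).
  { assert (0 <= lam ^ 2) by (apply pow_le; lra).
    assert (Hl2 : 0 <= lam ^ 2 * (Rb * Rb)) by (apply Rmult_le_pos; nra).
    assert (Hp2 := HB1 _ Hl2).
    assert (Rabs (1 + lam ^ 2 * (Rb * Rb) - 1) < al).
    { rewrite Rabs_right by lra. replace (1 + lam ^ 2 * (Rb * Rb) - 1) with (lam ^ 2 * (Rb * Rb)) by ring.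
      assert (lam ^ 2 * (Rb * Rb) <= beta * (Rb * Rb)) by (apply Rmult_le_compat_r; nra).
      assert (beta * (Rb * Rb + 1) <= al).
      { destruct Hbeta as [_ [Hb1 _]]. apply Rmult_le_reg_r with (/ (Rb * Rb + 1)).
        apply Rinv_0_lt_compat; nra. rewrite Rmult_assoc, Rinv_r by nra. lra. }
      nra. }
    specialize (Hcont _ H0). rewrite Rabs_right in Hcont by lra.
    assert ((Rpower (1 + lam ^ 2 * (Rb * Rb)) q - 1) * RMp < d0 / 2).
    { replace (d0 / 2) with (d0 / (2 * RMp) * RMp) by (field; lra).
      apply Rmult_lt_compat_r; lra. }
    assert (lam ^ 2 * Kc * 4 * M < d0 / 2).
    { destruct Hbeta as [_ [_ Hb2]].
      assert (beta * (2 * (4 * Kc * M + 1)) <= d0).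
      { apply Rmult_le_reg_r with (/ (2 * (4 * Kc * M + 1))).
        apply Rinv_0_lt_compat; nra. rewrite Rmult_assoc, Rinv_r by nra. lra. }
      assert (0 <= 4 * Kc * M) by nra. nra. }
    split; [|unfold d; lra].
    unfold d. apply Rplus_le_le_0_compat. repeat apply Rmult_le_pos; lra.
    apply Rmult_le_pos; lra. }
  set (Th := (th + d * d * Rb) * exp ((L + 2) * Rb)).
  assert (HTh : Th < eta * eta).
  { unfold Th. fold Kx. assert (d * d <= d) by nra.
    assert (d * Rb * Kx < eta * eta / 4).
    { destruct Hd0 as [_ [_ Hd3]]. 
      assert (d * (4 * Kx * Rb) < eta * eta).
      { apply Rlt_le_trans with (d0 * (4 * Kx * Rb)).
        apply Rmult_lt_compat_r. nra. lra.
        apply Rmult_le_reg_r with (/ (4 * Kx * Rb)). apply Rinv_0_lt_compat; nra.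
        rewrite Rmult_assoc, Rinv_r by nra. rewrite Rmult_1_r. exact Hd3. }
      nra. }
    assert (th * Kx = eta * eta / 4) by (unfold th; field; lra).
    assert (d * d * Rb * Kx <= d * Rb * Kx) by (apply Rmult_le_compat_r; [lra|]; apply Rmult_le_compat_r; lra).
    nra. }
  assert (Hcmp : forall x, 0 < x <= Rb ->
    (v x - ub x) * (v x - ub x) + (v1 x - ub1 x) * (v1 x - ub1 x) <= Th).
  { apply (compare (K - 1) Rb bb L d th v v1 v2 ub ub1 ub2); try lra.
    - intros x Hx. destruct (Hv x Hx) as [A1 [A2 _]]. destruct (Hubd x Hx) as [B1 [B2 _]]. tauto.
    - intros x Hx Hw.
      assert (Hux : 2 * bb <= ub x <= c).
      { split. unfold bb. replace (2 * (ub Rb / 2)) with (ub Rb) by field. apply Hubni; lra.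
        apply Hublc; lra. }
      pose proof (Rabs_def2 _ _ Hw) as Hw'.
      assert (Hvx : bb <= v x <= M) by (unfold M; lra).
      destruct (Hv x (proj1 Hx)) as [_ [_ Heq]]. specialize (Heq ltac:(fold (v x); lra)).
      fold (v x) (v1 x) (v2 x) in Heq. fold K in Heq. fold Kc in Heq.
      destruct (Hubd x (proj1 Hx)) as [_ [_ Heub]]. rewrite rpow_pos in Heub by lra. fold K in Heub.
      set (B := Rpower (1 + (lam * x) ^ 2) q) in *.
      set (AA := A (lam * x)) in *.
      assert (HAA : 0 < AA <= 2).
      { unfold AA, A. assert (0 <= (lam * x) ^ 2) by (apply pow_le; nra).
        split. apply Rdiv_lt_0_compat; lra.
        apply Rmult_le_reg_r with (1 + (lam * x) ^ 2). lra.
        unfold Rdiv. rewrite Rmult_assoc, Rinv_l by lra. nra. }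
      assert (HA2 : AA ^ 2 <= 4) by (simpl; nra).
      assert (Hl2 : 0 <= lam ^ 2) by (apply pow_le; lra).
      set (T1 := lam ^ 2 * Kc * AA ^ 2 * v x) in *.
      assert (HT1 : 0 <= T1 <= lam ^ 2 * Kc * 4 * M).
      { assert (0 <= AA ^ 2) by (apply pow_le; lra).
        unfold T1. split. apply Rmult_le_pos; [apply Rmult_le_pos; [apply Rmult_le_pos|]|]; lra.
        assert (0 <= lam ^ 2 * Kc) by (apply Rmult_le_pos; lra).
        assert (AA ^ 2 * v x <= 4 * M).
        { apply Rmult_le_compat; try lra. }
        replace (lam ^ 2 * Kc * AA ^ 2 * v x) with ((lam ^ 2 * Kc) * (AA ^ 2 * v x)) by ring.
        replace (lam ^ 2 * Kc * 4 * M) with ((lam ^ 2 * Kc) * (4 * M)) by ring.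
        apply Rmult_le_compat_l; lra. }
      assert (HB : 1 <= B <= Rpower (1 + lam ^ 2 * (Rb * Rb)) q).
      { split. apply HB1. apply pow_le; nra.
        apply Rle_Rpower_l. lra. split. pose proof (pow2_ge_0 (lam * x)); lra.
        rewrite Rpow_mult_distr.
        assert (x ^ 2 <= Rb * Rb) by (simpl; nra).
        assert (lam ^ 2 * x ^ 2 <= lam ^ 2 * (Rb * Rb)) by (apply Rmult_le_compat_l; lra). lra. }
      assert (HRv : 0 < Rpower (v x) p <= RMp).
      { split. apply exp_pos. apply Rle_Rpower_l; lra. }
      assert (Hlip := lip_rpow p bb M (Rlt_le _ _ Hp1) Hbb (v x) (ub x) Hvx ltac:(unfold M in *; lra)).
      fold L in Hlip.
      apply Rabs_le_inv in Hlip.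
      assert (H2 : 0 <= (B - 1) * Rpower (v x) p <= (Rpower (1 + lam ^ 2 * (Rb * Rb)) q - 1) * RMp).
      { split. apply Rmult_le_pos; lra. apply Rmult_le_compat; lra. }
      assert (Hdiff : v2 x + (K - 1) / x * v1 x - (ub2 x + (K - 1) / x * ub1 x)
        = - T1 - (B - 1) * Rpower (v x) p - (Rpower (v x) p - Rpower (ub x) p)).
      { assert (v2 x + (K - 1) / x * v1 x = - T1 - B * Rpower (v x) p) by lra.
        assert (ub2 x + (K - 1) / x * ub1 x = - Rpower (ub x) p) by lra. lra. }
      rewrite Hdiff. apply Rabs_le. unfold d.
      assert (0 <= Rabs (v x - ub x)) by apply Rabs_pos.
      assert (0 <= L * Rabs (v x - ub x)) by (apply Rmult_le_pos; lra).
      split; lra.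
    - apply (near0 (fun x => v x - ub x) (fun x => v1 x - ub1 x)).
      + intros x Hx. apply d_sub. apply (Hv x Hx). apply (Hubd x Hx).
      + intros e He.
        assert (Hcl : 0 < c * lam) by (apply Rmult_lt_0_compat; lra).
        destruct (small_o (u g) g Hulim (e / 2 * g / (c * lam))) as [d1 [Hd1 H1]].
        { apply Rdiv_lt_0_compat; [apply Rmult_lt_0_compat|]; lra. }
        destruct (proj1 HLE (e / 2)) as [d2 [Hd2 H2]]; [lra|].
        exists (Rmin (d1 / lam) d2). split. apply Rmin_pos; [apply Rdiv_lt_0_compat|]; lra.
        intros x [Hx0 Hx1].
        assert (x < d1 / lam) by (eapply Rlt_le_trans; [exact Hx1| apply Rmin_l]).
        assert (x < d2) by (eapply Rlt_le_trans; [exact Hx1| apply Rmin_r]).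
        assert (Hlx : 0 < lam * x < d1).
        { split. apply Rmult_lt_0_compat; lra.
          apply Rmult_lt_compat_l with (r := lam) in H; auto.
          replace (lam * (d1 / lam)) with d1 in H by (field; lra). exact H. }
        specialize (H1 _ Hlx). specialize (H2 x (conj Hx0 H0)).
        assert (Hvc : Rabs (v x - c) < e / 2 * x).
        { unfold v. replace (c / g * u g (lam * x) - c) with (c / g * (u g (lam * x) - g)) by (field; lra).
          rewrite Rabs_mult, (Rabs_right (c / g)) by (apply Rle_ge; left; apply Rdiv_lt_0_compat; lra).
          apply Rlt_le_trans with (c / g * (e / 2 * g / (c * lam) * (lam * x))).
          apply Rmult_lt_compat_l. apply Rdiv_lt_0_compat; lra. exact H1.
          right. field. lra. }
        replace (v x - ub x) with ((v x - c) - (ub x - c)) by ring.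
        eapply Rle_lt_trans. apply Rabs_triang. rewrite Rabs_Ropp. lra.
    - unfold Th in HTh. destruct Heta as [He1 [He2 _]].
      assert (eta * eta <= bb * bb) by (apply Rmult_le_compat; lra). lra. }
  assert (Hmu' : mu' = 2 / (p - 1)) by reflexivity.
  assert (Hy : forall s, yhat (S (S m)) p g (u g) s = exp (mm * mu' * s) / a * v (exp (mm * s))).
  { intro s. unfold yhat, yfun. fold q c mm a mu'.
    assert (E1 : exp (mm * (s - ln g / (mm * mu'))) = lam * exp (mm * s)).
    { unfold lam. rewrite <- exp_plus. f_equal. rewrite <- Hmu'. field. lra. }
    assert (E2 : exp (- mm * mu' * (s - ln g / (mm * mu'))) = exp (- (mm * mu' * s)) * g).
    { transitivity (exp (- (mm * mu' * s) + ln g)). f_equal. field. lra.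
      rewrite exp_plus, exp_ln; auto. }
    rewrite E1, E2. unfold v. rewrite exp_Ropp.
    assert (0 < exp (mm * mu' * s)) by apply exp_pos. field. repeat split; lra. }
  assert (Hyb : forall s, ybar (S (S m)) p ub s = exp (mm * mu' * s) / a * ub (exp (mm * s))).
  { intro s. unfold ybar. fold mm a mu'.
    replace (- mm * mu' * s) with (- (mm * mu' * s)) by ring. rewrite exp_Ropp.
    assert (0 < exp (mm * mu' * s)) by apply exp_pos. field. lra. }
  intros s Hs.
  set (rho := exp (mm * s)).
  assert (Hrho : 0 < rho <= Rb).
  { split. apply exp_pos. apply exp_le_mono. apply Rmult_le_compat_l; lra. }
  specialize (Hcmp rho Hrho).
  assert (Hw : Rabs (v rho - ub rho) < eta).
  { apply sq_lt_abs. lra. assert (0 <= (v1 rho - ub1 rho) * (v1 rho - ub1 rho)) by apply Rle_0_sqr. lra. }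
  assert (Hw1 : Rabs (v1 rho - ub1 rho) < eta).
  { apply sq_lt_abs. lra. assert (0 <= (v rho - ub rho) * (v rho - ub rho)) by apply Rle_0_sqr. lra. }
  set (W := exp (mm * mu' * s) / a).
  assert (HW : 0 < W <= Z).
  { split. apply Rdiv_lt_0_compat; auto; apply exp_pos.
    unfold W, Z. unfold Rdiv. apply Rmult_le_compat_r. left; apply Rinv_0_lt_compat; auto.
    apply exp_le_mono. apply Rmult_le_compat_l; [|lra]. apply Rmult_le_pos; lra. }
  assert (HZe : Z * eta * (1 + mm * (mu' + Rb)) <= eps / 2).
  { destruct Heta as [_ [_ He3]].
    assert (Z * (1 + mm * (mu' + Rb)) * eta <= Z * (1 + mm * (mu' + Rb)) * (eps / Dn)).
    { apply Rmult_le_compat_l; auto. assert (0 < mm * (mu' + Rb)) by (apply Rmult_lt_0_compat; lra). nra. }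
    replace (Z * (1 + mm * (mu' + Rb)) * (eps / Dn)) with (eps / 2) in H by (unfold Dn; field; split; [|lra]; assert (0 < mm * (mu' + Rb)) by (apply Rmult_lt_0_compat; lra); lra).
    lra. }
  assert (Hmr : 0 < mm * (mu' + Rb)) by (apply Rmult_lt_0_compat; lra).
  split.
  - rewrite Hy, Hyb. fold rho W. replace (W * v rho - W * ub rho) with (W * (v rho - ub rho)) by ring.
    rewrite Rabs_mult, (Rabs_right W) by lra.
    apply Rle_lt_trans with (Z * eta).
    apply Rmult_le_compat; try lra. apply Rabs_pos.
    assert (0 < Z * eta) by (apply Rmult_lt_0_compat; lra). nra.
  - assert (HD1 : Dyhat g s = exp (mm * mu' * s) * (mm * mu') / a * v rho
                    + exp (mm * mu' * s) / a * (v1 rho * (rho * mm))).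
    { eapply uniqueness_limite. apply (Hdy g Hg0 s).
      apply dl_ext with (fun s => exp (mm * mu' * s) / a * v (exp (mm * s))).
      intro t; symmetry; apply Hy.
      apply (d_weight a (mm * mu') mm v v1 s). apply (Hv rho (proj1 Hrho)). }
    assert (HD2 : Dybar s = exp (mm * mu' * s) * (mm * mu') / a * ub rho
                    + exp (mm * mu' * s) / a * (ub1 rho * (rho * mm))).
    { eapply uniqueness_limite. apply (Hdb s).
      apply dl_ext with (fun s => exp (mm * mu' * s) / a * ub (exp (mm * s))).
      intro t; symmetry; apply Hyb.
      apply (d_weight a (mm * mu') mm ub ub1 s). apply (Hubd rho (proj1 Hrho)). }
    rewrite HD1, HD2.
    replace (exp (mm * mu' * s) * (mm * mu') / a * v rho + exp (mm * mu' * s) / a * (v1 rho * (rho * mm)) -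
      (exp (mm * mu' * s) * (mm * mu') / a * ub rho + exp (mm * mu' * s) / a * (ub1 rho * (rho * mm))))
      with (W * (mm * mu' * (v rho - ub rho) + mm * rho * (v1 rho - ub1 rho))) by (unfold W; field; lra).
    rewrite Rabs_mult, (Rabs_right W) by lra.
    assert (Rabs (mm * mu' * (v rho - ub rho) + mm * rho * (v1 rho - ub1 rho)) <= mm * (mu' + Rb) * eta).
    { eapply Rle_trans. apply Rabs_triang. rewrite !Rabs_mult.
      rewrite (Rabs_right mm), (Rabs_right mu'), (Rabs_right rho) by lra.
      assert (mm * mu' * Rabs (v rho - ub rho) <= mm * mu' * eta) by (apply Rmult_le_compat_l; [nra|lra]).
      assert (mm * rho * Rabs (v1 rho - ub1 rho) <= mm * Rb * eta).
      { apply Rmult_le_compat; try lra. apply Rmult_le_pos; lra. apply Rabs_pos.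
        apply Rmult_le_compat_l; lra. }
      lra. }
    apply Rle_lt_trans with (Z * (mm * (mu' + Rb) * eta)).
    apply Rmult_le_compat; try lra. apply Rabs_pos.
    assert (0 < Z * eta) by (apply Rmult_lt_0_compat; lra). nra.
Qed.
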